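(* Let $\pi>0$ and let $A:[0,D]\to[0,\infty)$ be differentiable with $A'(Q)<0$ for all $Q\in[0,D]$. For a user type $(\beta,\theta)$ with $\beta\in[0,1]$, $\theta>0$, define the willingness-to-pay $\sigma(Q,\beta,\theta)=-[\theta\beta+\pi(1-\beta)]A'(Q)$. Then for any two user types $(\beta,\theta)$, $(\beta',\theta')$ and any $Q,Q'\in[0,D]$, $$\sigma(Q,\beta,\theta)<\sigma(Q,\beta',\theta')\iff\sigma(Q',\beta,\theta)<\sigma(Q',\beta',\theta').$$ Consequently, if the finitely many user types $\{(\beta_m,\theta_k)\}$ are listed as $\Lambda_1(Q),\dots,\Lambda_{KM}(Q)$ in ascending order of $\sigma(Q,\cdot)$, the same list is in ascending order of $\sigma(Q',\cdot)$ for every other $Q'\in[0,D]$, i.e. the ordering does not depend on the data cap.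
   Context: Model: a mobile operator charges an overage price $\pi>0$ per unit of data beyond the data cap. $A(Q)$ denotes a subscriber's expected overage data consumption under data cap $Q\in[0,D]$; the paper takes $A$ to be decreasing and convex. A user type is a pair $(\beta,\theta)$: $\theta>0$ is the user's valuation of one unit of data and $\beta\in[0,1]$ his network substitutability. There are $K$ valuations $0<\theta_1<\dots<\theta_K$ and $M$ substitutabilities $0\le\beta_1<\dots<\beta_M\le1$, giving $KM$ user types. *)

(* Defs.v *)
From Stdlib Require Import Reals Lra List Sorting.Sorted.
From Coquelicot Require Import Coquelicot.
Open Scope R_scope.

Definition user_type := (R * R)%type.

Definition valid_type (t : user_type) : Prop :=
  0 <= fst t <= 1 /\ 0 < snd t.

Definition wtp (pi : R) (A : R -> R) (Q : R) (t : user_type) : R :=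
  - (snd t * fst t + pi * (1 - fst t)) * Derive A Q.

(* Main.v *)
Require Import Defs.
From Stdlib Require Import Reals List Sorting.Sorted.
From Coquelicot Require Import Coquelicot.
Open Scope R_scope.

From Stdlib Require Import Lra Psatz.

Lemma sorted_mono {T} (P P' : T -> T -> Prop) (l : list T) :
  (forall x y, P x y -> P' x y) -> Sorted P l -> Sorted P' l.
Proof.
  intros H S; induction S; constructor; auto.
  destruct H0; constructor; auto.
Qed.

Lemma wtp_le pi A Q t t' : Derive A Q < 0 ->
  (wtp pi A Q t <= wtp pi A Q t' <->
   snd t * fst t + pi * (1 - fst t) <= snd t' * fst t' + pi * (1 - fst t')).
Proof.
  unfold wtp; intros Hd; set (a := snd t * fst t + pi * (1 - fst t));
  set (b := snd t' * fst t' + pi * (1 - fst t')); split; intros; nra.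
Qed.

Lemma wtp_lt pi A Q t t' : Derive A Q < 0 ->
  (wtp pi A Q t < wtp pi A Q t' <->
   snd t * fst t + pi * (1 - fst t) < snd t' * fst t' + pi * (1 - fst t')).
Proof.
  unfold wtp; intros Hd; set (a := snd t * fst t + pi * (1 - fst t));
  set (b := snd t' * fst t' + pi * (1 - fst t')); split; intros; nra.
Qed.

Theorem lemma1 (pi D : R) (A : R -> R)
  (Hpi : 0 < pi)
  (HA_nonneg : forall Q, 0 <= Q <= D -> 0 <= A Q)
  (HA_diff : forall Q, 0 <= Q <= D -> ex_derive A Q)
  (HA_dec : forall Q, 0 <= Q <= D -> Derive A Q < 0) :
  (forall (t t' : user_type) (Q Q' : R),
      valid_type t -> valid_type t' ->
      0 <= Q <= D -> 0 <= Q' <= D ->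
      (wtp pi A Q t < wtp pi A Q t' <-> wtp pi A Q' t < wtp pi A Q' t'))
  /\
  (forall (l : list user_type) (Q Q' : R),
      List.Forall valid_type l ->
      0 <= Q <= D -> 0 <= Q' <= D ->
      Sorted (fun t t' => wtp pi A Q t <= wtp pi A Q t') l ->
      Sorted (fun t t' => wtp pi A Q' t <= wtp pi A Q' t') l).
Proof.
  split.
  - intros t t' Q Q' _ _ HQ HQ'.
    rewrite (wtp_lt pi A Q t t' (HA_dec Q HQ)), (wtp_lt pi A Q' t t' (HA_dec Q' HQ')).
    tauto.
  - intros l Q Q' _ HQ HQ'. apply sorted_mono. intros x y.
    rewrite (wtp_le pi A Q x y (HA_dec Q HQ)), (wtp_le pi A Q' x y (HA_dec Q' HQ')).
    auto.
Qed.
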